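(* Fix $u_{\max}>0$, $u^*\in[0,u_{\max}]$, $u_b\in[0,u_{\max}]$, $C\ge 0$, and consider the problem (P1): $\min_{s\in\mathcal C_a}\{s^2: p(s)\le -C\}$ where $p(s)=g(s,u_b)$. Let $\delta=\min\{u^*,\hat u\}$, $m=\frac{2u^*+u_{\max}}4$. (i) If $u^*\ne\hat u$: $p'<0$ on $[0,\delta)\cup(\gamma,u_{\max}]$ and $p'>0$ on $(\delta,\gamma)$, where $\gamma=\max\{u^*,\hat u\}$. Moreover: if $p(0)\le -C$, the optimal solution of (P1) is $s=0$; if $p(\delta)\le -C<p(0)$, the optimal solution is the smallest root of $p(s)=-C$ in $\mathcal C_a$ (which lies in $(0,\delta]$); if $-C<p(\delta)$, (P1) is infeasible. (ii) If $u^*=\hat u$: $p'<0$ on $[0,u_{\max}]\setminus\{\hat u\}$ and $p'(\hat u)=0$. Moreover: if $p(0)\le -C$, the optimal solution is $s=0$; if $p(m)\le -C<p(0)$, the optimal solution is the unique root of $p(s)=-C$ in $(0,m]$; if $-C<p(m)$, (P1) is infeasible.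
   Context: $f(u)=u(1-u/u_{\max})$ on $[0,u_{\max}]$, $\hat u=u_{\max}/2$ its unique maximizer, $F$ a primitive of $f$, $g(s,z)=(s-u^* )f(s)-(z-u^* )f(z)-F(s)+F(z)$, and $\mathcal C_a=[0,\frac{2u^*+u_{\max}}4]$. *)

(* Defs.v *)
From Stdlib Require Import Reals Lra.
From Coquelicot Require Import Coquelicot.
Open Scope R_scope.

Definition f (umax u : R) : R := u * (1 - u / umax).
(* a primitive of f (any primitive gives the same g, constants cancel) *)
Definition F (umax u : R) : R := u ^ 2 / 2 - u ^ 3 / (3 * umax).
(* unique maximizer of f *)
Definition uhat (umax : R) : R := umax / 2.

Definition g (umax ustar s z : R) : R :=
  (s - ustar) * f umax s - (z - ustar) * f umax z - F umax s + F umax z.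

Definition p (umax ustar ub s : R) : R := g umax ustar s ub.

Definition mC (umax ustar : R) : R := (2 * ustar + umax) / 4.

Definition Ca (umax ustar s : R) : Prop := 0 <= s <= mC umax ustar.

Definition P1_feasible (umax ustar ub C s : R) : Prop :=
  Ca umax ustar s /\ p umax ustar ub s <= - C.

Definition P1_optimal (umax ustar ub C s : R) : Prop :=
  P1_feasible umax ustar ub C s /\
  forall t, P1_feasible umax ustar ub C t -> s ^ 2 <= t ^ 2.

Definition P1_infeasible (umax ustar ub C : R) : Prop :=
  ~ exists s, P1_feasible umax ustar ub C s.

(* Main.v *)
Require Import Defs.
From Stdlib Require Import Reals Lra Psatz.
From Coquelicot Require Import Coquelicot.
Open Scope R_scope.

Definition dd (umax ustar s : R) : R := (s - ustar) * (1 - 2 * s / umax).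

Lemma p_is_derive umax ustar ub s : 0 < umax ->
  is_derive (p umax ustar ub) s (dd umax ustar s).
Proof.
  intros H. unfold p, g, Defs.f, F, dd.
  auto_derive; [lra|]. field. lra.
Qed.

Lemma p_Derive umax ustar ub s : 0 < umax ->
  Derive (p umax ustar ub) s = dd umax ustar s.
Proof. intros H. apply is_derive_unique, p_is_derive, H. Qed.

Lemma p_MVT umax ustar ub a b : 0 < umax -> a < b ->
  exists c, a < c < b /\ p umax ustar ub b - p umax ustar ub a = dd umax ustar c * (b - a).
Proof.
  intros H Hab.
  destruct (MVT_cor2 (p umax ustar ub) (dd umax ustar) a b Hab) as [c [H1 H2]].
  { intros c _. apply is_derive_Reals, p_is_derive, H. }
  exists c; split; auto.
Qed.

Lemma p_cont umax ustar ub K : 0 < umax ->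
  continuity (fun s => K - p umax ustar ub s).
Proof.
  intros H x. apply derivable_continuous_pt.
  exists (0 - dd umax ustar x).
  apply (derivable_pt_lim_minus (fun _ => K) (p umax ustar ub)).
  - apply derivable_pt_lim_const.
  - apply is_derive_Reals, p_is_derive, H.
Qed.

Lemma dd_neg umax ustar c : 0 < umax -> (c - ustar) * (umax - 2 * c) < 0 -> dd umax ustar c < 0.
Proof.
  intros H H1. assert (E : dd umax ustar c * umax = (c - ustar) * (umax - 2 * c)).
  { unfold dd. field. lra. }
  nra.
Qed.

Lemma dd_pos umax ustar c : 0 < umax -> 0 < (c - ustar) * (umax - 2 * c) -> 0 < dd umax ustar c.
Proof.
  intros H H1. assert (E : dd umax ustar c * umax = (c - ustar) * (umax - 2 * c)).
  { unfold dd. field. lra. }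
  nra.
Qed.

Lemma opt_char umax ustar ub C s0 :
  0 <= s0 -> P1_feasible umax ustar ub C s0 ->
  (forall t, P1_feasible umax ustar ub C t -> s0 <= t) ->
  forall s, P1_optimal umax ustar ub C s <-> s = s0.
Proof.
  intros H0 Hf Hl s. split.
  - intros [Hs Ho]. pose proof (Hl s Hs). pose proof (Ho s0 Hf).
    destruct Hs as [[Hs1 _] _]. nra.
  - intros ->. split; auto. intros t Ht. pose proof (Hl t Ht). nra.
Qed.

Theorem mainTheorem4 (umax ustar ub C : R)
  (Humax : 0 < umax) (Hustar : 0 <= ustar <= umax)
  (Hub : 0 <= ub <= umax) (HC : 0 <= C) :
  let delta := Rmin ustar (uhat umax) in
  let gamma := Rmax ustar (uhat umax) in
  let m := mC umax ustar in
  let pp := p umax ustar ub in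
  (* (i) *)
  (ustar <> uhat umax ->
     (forall s, (0 <= s < delta \/ gamma < s <= umax) -> Derive pp s < 0) /\
     (forall s, delta < s < gamma -> 0 < Derive pp s) /\
     (pp 0 <= - C -> forall s, P1_optimal umax ustar ub C s <-> s = 0) /\
     (pp delta <= - C < pp 0 ->
        exists s0, (0 < s0 <= delta) /\ Ca umax ustar s0 /\ pp s0 = - C /\
          (forall t, Ca umax ustar t -> pp t = - C -> s0 <= t) /\
          (forall s, P1_optimal umax ustar ub C s <-> s = s0)) /\
     (- C < pp delta -> P1_infeasible umax ustar ub C)) /\
  (* (ii) *)
  (ustar = uhat umax ->
     (forall s, 0 <= s <= umax -> s <> uhat umax -> Derive pp s < 0) /\
     Derive pp (uhat umax) = 0 /\
     (pp 0 <= - C -> forall s, P1_optimal umax ustar ub C s <-> s = 0) /\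
     (pp m <= - C < pp 0 ->
        exists s0, (0 < s0 <= m) /\ pp s0 = - C /\
          (forall t, 0 < t <= m -> pp t = - C -> t = s0) /\
          (forall s, P1_optimal umax ustar ub C s <-> s = s0)) /\
     (- C < pp m -> P1_infeasible umax ustar ub C)).
Proof.
  intros delta gamma m pp.
  assert (HD : forall s, Derive pp s = dd umax ustar s) by (intros; apply p_Derive; lra).
  assert (HM : forall a b, a < b -> exists c, a < c < b /\ pp b - pp a = dd umax ustar c * (b - a))
    by (intros; apply p_MVT; lra).
  assert (Hm : m = (ustar + uhat umax) / 2) by (unfold m, mC, uhat; field).
  assert (Hzero : forall s, pp 0 <= - C -> P1_optimal umax ustar ub C s <-> s = 0).
  { intros s Hp. apply opt_char; [lra| |].
    - split; [|exact Hp]. unfold Ca, mC. lra.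
    - intros t [[Ht _] _]. exact Ht. }
  assert (Hroot : forall b, 0 < b -> pp b <= - C < pp 0 ->
     exists s0, 0 < s0 <= b /\ pp s0 = - C).
  { intros b Hb [H1 H2].
    destruct (Req_dec (pp b) (- C)) as [E|E].
    - exists b. split; [lra|exact E].
    - destruct (IVT (fun s => - C - pp s) 0 b (p_cont umax ustar ub (- C) Humax) Hb)
        as [z [Hz1 Hz2]]; simpl; try lra.
      exists z. assert (z <> 0) by (intros ->; lra). split; lra. }
  split.
  - intros Hne.
    assert (Hcase : (delta = ustar /\ gamma = uhat umax /\ ustar < uhat umax) \/
                    (delta = uhat umax /\ gamma = ustar /\ uhat umax < ustar)).
    { unfold delta, gamma. destruct (Rlt_or_le ustar (uhat umax)) as [H|H].
      - left. rewrite Rmin_left, Rmax_right; lra.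
      - right. assert (uhat umax < ustar) by lra. rewrite Rmin_right, Rmax_left; lra. }
    assert (Huh : uhat umax = umax / 2) by reflexivity.
    assert (Hdneg : forall c, (0 <= c < delta \/ gamma < c <= umax) -> dd umax ustar c < 0).
    { intros c Hc. apply dd_neg; [lra|]. destruct Hcase as [[-> [-> ?]]|[-> [-> ?]]];
      rewrite Huh in *; nra. }
    assert (Hdpos : forall c, delta < c < gamma -> 0 < dd umax ustar c).
    { intros c Hc. apply dd_pos; [lra|]. destruct Hcase as [[-> [-> ?]]|[-> [-> ?]]];
      rewrite Huh in *; nra. }
    assert (Hdel0 : 0 <= delta) by (destruct Hcase as [[-> _]|[-> _]]; rewrite ?Huh; lra).
    assert (Hdm : delta < m < gamma) by (rewrite Hm; destruct Hcase as [[-> [-> ?]]|[-> [-> ?]]]; lra).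
    assert (Hgu : gamma <= umax) by (destruct Hcase as [[_ [-> _]]|[_ [-> _]]]; rewrite ?Huh; lra).
    assert (Hdec : forall a b, 0 <= a < b -> b <= delta -> pp b < pp a).
    { intros a b Ha Hb. destruct (HM a b) as [c [Hc Hc2]]; [lra|].
      pose proof (Hdneg c ltac:(lra)). nra. }
    assert (Hinc : forall t, delta <= t <= m -> pp delta <= pp t).
    { intros t Ht. destruct (Req_dec t delta) as [->|Hne2]; [lra|].
      destruct (HM delta t) as [c [Hc Hc2]]; [lra|].
      pose proof (Hdpos c ltac:(lra)). nra. }
    assert (Hlow : forall t, Ca umax ustar t -> pp delta <= pp t).
    { intros t [Ht1 Ht2]. fold m in Ht2. destruct (Rle_or_lt t delta) as [H|H].
      - destruct (Req_dec t delta) as [->|Hne2]; [lra|]. pose proof (Hdec t delta ltac:(lra) ltac:(lra)); lra.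
      - apply Hinc; lra. }
    split; [intros s Hs; rewrite HD; apply Hdneg; exact Hs|].
    split; [intros s Hs; rewrite HD; apply Hdpos; exact Hs|].
    split; [intros Hz s; exact (Hzero s Hz)|].
    split.
    + intros Hp.
      assert (Hdp : 0 < delta).
      { destruct (Req_dec delta 0) as [E|E]; [|lra]. rewrite E in Hp. lra. }
      destruct (Hroot delta Hdp Hp) as [s0 [Hs0 Hs0e]].
      assert (HCa : Ca umax ustar s0) by (unfold Ca; fold m; lra).
      assert (Hleast : forall t, Ca umax ustar t -> pp t <= - C -> s0 <= t).
      { intros t [Ht1 Ht2] Hpt. destruct (Rle_or_lt s0 t) as [H|H]; [exact H|].
        pose proof (Hdec t s0 ltac:(lra) ltac:(lra)). lra. }
      exists s0. split; [exact Hs0|]. split; [exact HCa|]. split; [exact Hs0e|].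
      split; [intros t Ht Hpt; apply Hleast; [exact Ht|lra]|].
      apply opt_char; [lra|split; [exact HCa|fold pp; lra]|].
      intros t [Ht Hpt]. apply Hleast; auto.
    + intros Hp [t [Ht Hpt]]. pose proof (Hlow t Ht). fold pp in Hpt. lra.
  - intros Heq.
    assert (Huh : uhat umax = umax / 2) by reflexivity.
    assert (Hm2 : m = uhat umax) by (rewrite Hm, Heq; field).
    assert (Hdneg : forall c, c <> uhat umax -> dd umax ustar c < 0).
    { intros c Hc. apply dd_neg; [lra|]. rewrite Heq, Huh in *.
      assert (0 < (c - umax/2) * (c - umax / 2)).
      { assert (c - umax/2 <> 0) by lra. nra. }
      nra. }
    assert (Hdec : forall a b, 0 <= a < b -> b <= m -> pp b < pp a).
    { intros a b Ha Hb. destruct (HM a b) as [c [Hc Hc2]]; [lra|].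
      pose proof (Hdneg c ltac:(lra)). nra. }
    assert (Hm0 : 0 < m) by (rewrite Hm2, Huh; lra).
    assert (Hlow : forall t, Ca umax ustar t -> pp m <= pp t).
    { intros t [Ht1 Ht2]. fold m in Ht2.
      destruct (Req_dec t m) as [->|Hne2]; [lra|]. pose proof (Hdec t m ltac:(lra) ltac:(lra)); lra. }
    split; [intros s _ Hs; rewrite HD; apply Hdneg; exact Hs|].
    split; [rewrite HD; unfold dd; rewrite Heq, Huh; field; lra|].
    split; [intros Hz s; exact (Hzero s Hz)|].
    split.
    + intros Hp.
      destruct (Hroot m Hm0 Hp) as [s0 [Hs0 Hs0e]].
      assert (HCa : Ca umax ustar s0) by (unfold Ca; fold m; lra).
      assert (Hleast : forall t, Ca umax ustar t -> pp t <= - C -> s0 <= t).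
      { intros t [Ht1 Ht2] Hpt. destruct (Rle_or_lt s0 t) as [H|H]; [exact H|].
        pose proof (Hdec t s0 ltac:(lra) ltac:(lra)). lra. }
      exists s0. split; [exact Hs0|]. split; [exact Hs0e|].
      split.
      * intros t Ht Hpt. destruct (Rtotal_order t s0) as [H|[H|H]]; auto.
        -- pose proof (Hdec t s0 ltac:(lra) ltac:(lra)). lra.
        -- pose proof (Hdec s0 t ltac:(lra) ltac:(lra)). lra.
      * apply opt_char; [lra|split; [exact HCa|fold pp; lra]|].
        intros t [Ht Hpt]. apply Hleast; auto.
    + intros Hp [t [Ht Hpt]]. pose proof (Hlow t Ht). fold pp in Hpt. lra.
Qed.
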